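(* In the setting of the context, let $x_0=x_0(0)$, $x_1=x_1(0)$ and $r_0=1/x_1$. Then, for $|x|\le 1$, $$\varphi_0(x)=\frac{\pi_{0,0}}{1-r_0x},$$ and for $j=1,2,\ldots$ and $|x|\le1$, $x\neq x_0$, $$\varphi_j(x)=\frac{a_j}{x-x_1}-\frac{q\varphi_{j-1}(x_0)(x+x_0)}{\bar q(x-x_1)}-\frac{q(px+\bar p)(\bar\mu_hx+\mu_h)}{p\bar q\bar\mu_h(x-x_1)}\cdot\frac{\varphi_{j-1}(x)-\varphi_{j-1}(x_0)}{x-x_0},$$ where $$a_j=\frac{[\bar p\bar q(\mu_l-\mu_h)-\bar pq\mu_l]\pi_{0,j}-\bar p\bar q\mu_l\pi_{0,j+1}+\bar pq(\mu_l-\mu_h)\pi_{0,j-1}-q(\bar p\bar\mu_h+p\mu_h)\varphi_{j-1}(x_0)}{p\bar q\bar\mu_h}.$$ Moreover $\pi_{0,0}=\frac{1-\rho}{\bar p\bar q}$.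
   Context: Fix $p,q,\mu_h,\mu_l\in(0,1)$ with $p+q+\mu_h+\mu_l=1$. For real $x$ write $\bar x=1-x$; let $\rho_h=p/\mu_h$, $\rho_l=q/\mu_l$, $\rho=\rho_h+\rho_l$, and assume $\rho<1$. Let $(Q_1(n),Q_2(n))_{n\ge0}$ be the discrete-time Markov chain on $\mathbb{Z}_{\ge0}^2$ (numbers of high- and low-priority customers in a discrete-time preemptive priority queue, early arrival system) whose one-step transition probabilities from $(i,j)$ to $(i+k,j+l)$ are as follows (unlisted transitions have probability $0$). If $i\ge1$, $j\ge0$: $(k,l)=(1,0)$: $p\bar q\bar\mu_h$; $(1,1)$: $pq\bar\mu_h$; $(0,1)$: $pq\mu_h+\bar pq\bar\mu_h$; $(-1,1)$: $\bar pq\mu_h$; $(-1,0)$: $\bar p\bar q\mu_h$; $(0,0)$: $\bar p\bar q\bar\mu_h+p\bar q\mu_h$. If $i=0$, $j\ge1$: $(1,0)$: $p\bar q\bar\mu_h$; $(1,1)$: $pq\bar\mu_h$; $(0,1)$: $pq\mu_h+\bar pq\bar\mu_l$; $(0,-1)$: $\bar p\bar q\mu_l$; $(0,0)$: $\bar p\bar q\bar\mu_l+p\bar q\mu_h+\bar pq\mu_l$. If $(i,j)=(0,0)$: $(1,0)$: $p\bar q\bar\mu_h$; $(1,1)$: $pq\bar\mu_h$; $(0,1)$: $pq\mu_h+\bar pq\bar\mu_l$; $(0,0)$: $\bar p\bar q+p\bar q\mu_h+\bar pq\mu_l$. Let $(\pi_{i,j})_{i,j\ge0}$ be its stationary distribution,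 and let $\varphi_j(x)=\sum_{i\ge0}\pi_{i,j}x^i$ for $j\ge0$. Define $\Delta(y)=(p\mu_h-\bar p\bar\mu_h)^2(qy+\bar q)^2-2(p\mu_h+\bar p\bar\mu_h)(qy+\bar q)+1$, and $x_0(y)=\frac{1-(p\mu_h+\bar p\bar\mu_h)(qy+\bar q)-\sqrt{\Delta(y)}}{2p\bar\mu_h(qy+\bar q)}$, $x_1(y)=\frac{1-(p\mu_h+\bar p\bar\mu_h)(qy+\bar q)+\sqrt{\Delta(y)}}{2p\bar\mu_h(qy+\bar q)}$, where the square root is the positive one for real $y$ with $\Delta(y)>0$ (in particular at $y=0$). *)

(* Defs.v *)
From Stdlib Require Import Reals ZArith.
From Coquelicot Require Import Coquelicot.

Open Scope R_scope.

Definition bar (x : R) : R := 1 - x.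

(* One-step transition probability from state (i,j) to state (k,l)
   of the discrete-time preemptive priority queue (early arrival system). *)
Definition trans (p q mh ml : R) (i j k l : nat) : R :=
  let dk := (Z.of_nat k - Z.of_nat i)%Z in
  let dl := (Z.of_nat l - Z.of_nat j)%Z in
  let is (a b : Z) := (Z.eqb dk a && Z.eqb dl b)%bool in
  if (1 <=? i)%nat then
    if is 1%Z 0%Z then p * bar q * bar mh
    else if is 1%Z 1%Z then p * q * bar mh
    else if is 0%Z 1%Z then p * q * mh + bar p * q * bar mh
    else if is (-1)%Z 1%Z then bar p * q * mh
    else if is (-1)%Z 0%Z then bar p * bar q * mh
    else if is 0%Z 0%Z then bar p * bar q * bar mh + p * bar q * mh
    else 0
  else if (1 <=? j)%nat then
    if is 1%Z 0%Z then p * bar q * bar mh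
    else if is 1%Z 1%Z then p * q * bar mh
    else if is 0%Z 1%Z then p * q * mh + bar p * q * bar ml
    else if is 0%Z (-1)%Z then bar p * bar q * ml
    else if is 0%Z 0%Z then bar p * bar q * bar ml + p * bar q * mh + bar p * q * ml
    else 0
  else
    if is 1%Z 0%Z then p * bar q * bar mh
    else if is 1%Z 1%Z then p * q * bar mh
    else if is 0%Z 1%Z then p * q * mh + bar p * q * bar ml
    else if is 0%Z 0%Z then bar p * bar q + p * bar q * mh + bar p * q * ml
    else 0.

(* pi is a stationary distribution of the chain: nonnegative, total mass 1,
   and global balance pi = pi P.  Since every transition changes each
   coordinate by at most one, the balance sum over all source states (i,j)
   reduces to the sources with i <= k+1 and j <= l+1 (the other terms of
   pi P at (k,l) are zero by definition of [trans]). *)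
Definition stationary (p q mh ml : R) (pi : nat -> nat -> R) : Prop :=
  (forall i j, 0 <= pi i j) /\
  is_lim_seq (fun N => sum_f_R0 (fun i => sum_f_R0 (fun j => pi i j) N) N) 1 /\
  (forall k l, pi k l =
     sum_f_R0 (fun i => sum_f_R0 (fun j => pi i j * trans p q mh ml i j k l) (l + 1))
              (k + 1)).

Definition phi (pi : nat -> nat -> R) (j : nat) (x : C) : C :=
  (Series (fun i => pi i j * Re (Cpow x i)), Series (fun i => pi i j * Im (Cpow x i))).

Definition Delta (p q mh : R) (y : R) : R :=
  (p * mh - bar p * bar mh) ^ 2 * (q * y + bar q) ^ 2
  - 2 * (p * mh + bar p * bar mh) * (q * y + bar q) + 1.

Definition x0f (p q mh : R) (y : R) : R :=
  (1 - (p * mh + bar p * bar mh) * (q * y + bar q) - sqrt (Delta p q mh y))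
  / (2 * p * bar mh * (q * y + bar q)).

Definition x1f (p q mh : R) (y : R) : R :=
  (1 - (p * mh + bar p * bar mh) * (q * y + bar q) + sqrt (Delta p q mh y))
  / (2 * p * bar mh * (q * y + bar q)).

(* Main.v *)
Require Import Defs.
From Stdlib Require Import Reals Lra Lia Psatz ZArith.
From Coquelicot Require Import Coquelicot.
Open Scope R_scope.

Ltac tsimp :=
  unfold trans; cbv zeta;
  repeat (match goal with |- context[Z.eqb ?d ?a] =>
     first [rewrite (proj2 (Z.eqb_eq d a)) by lia | rewrite (proj2 (Z.eqb_neq d a)) by lia] end);
  repeat (match goal with |- context [Nat.leb ?a ?b] =>
     first [rewrite (proj2 (Nat.leb_le a b)) by lia | rewrite (proj2 (Nat.leb_nle a b)) by lia] end);
  cbv beta iota delta [andb];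
  repeat (match goal with |- context [if ?b then _ else _] => destruct b end).

Lemma sum3 (F : nat -> R) n : (forall i, (i < n)%nat -> F i = 0) ->
  sum_f_R0 F (n+2) = F n + F (S n) + F (S (S n)).
Proof.
  intros H. destruct n as [|n].
  - simpl. ring.
  - replace (S n + 2)%nat with (S (S (S n))) by lia. simpl.
    rewrite (sum_eq_R0 F n). ring. intros; apply H; lia.
Qed.


Lemma bal_E1 p q mh ml pi (H : forall k l, pi k l =
     sum_f_R0 (fun i => sum_f_R0 (fun j => pi i j * trans p q mh ml i j k l) (l + 1)) (k + 1)) k l :
  pi (S k) (S l) = p*bar q*bar mh * pi k (S l) + p*q*bar mh * pi k l
    + (p*q*mh + bar p*q*bar mh) * pi (S k) l + bar p*q*mh * pi (S (S k)) l
    + bar p*bar q*mh * pi (S (S k)) (S l)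
    + (bar p*bar q*bar mh + p*bar q*mh) * pi (S k) (S l).
Proof.
  etransitivity; [apply H|].
  replace (S k + 1)%nat with (k+2)%nat by lia.
  replace (S l + 1)%nat with (l+2)%nat by lia.
  rewrite sum3.
  2:{ intros i Hi. apply sum_eq_R0. intros j _. tsimp; ring. }
  rewrite !sum3; try (intros i Hi; tsimp; ring).
  tsimp; ring.
Qed.

Lemma sum1 (F : nat -> R) : sum_f_R0 F (0+1) = F 0%nat + F 1%nat.
Proof. reflexivity. Qed.

Lemma bal_E0 p q mh ml pi (H : forall k l, pi k l =
     sum_f_R0 (fun i => sum_f_R0 (fun j => pi i j * trans p q mh ml i j k l) (l + 1)) (k + 1)) l :
  pi 0%nat (S l) = (p*q*mh + bar p*q*bar ml) * pi 0%nat l + bar p*q*mh * pi 1%nat l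
    + (bar p*bar q*bar ml + p*bar q*mh + bar p*q*ml) * pi 0%nat (S l)
    + bar p*bar q*mh * pi 1%nat (S l) + bar p*bar q*ml * pi 0%nat (S (S l)).
Proof.
  etransitivity; [apply H|].
  rewrite sum1.
  replace (S l + 1)%nat with (l+2)%nat by lia.
  rewrite !sum3; try (intros i Hi; tsimp; ring).
  tsimp; ring.
Qed.

Lemma bal_F1 p q mh ml pi (H : forall k l, pi k l =
     sum_f_R0 (fun i => sum_f_R0 (fun j => pi i j * trans p q mh ml i j k l) (l + 1)) (k + 1)) k :
  pi (S k) 0%nat = p*bar q*bar mh * pi k 0%nat
    + (bar p*bar q*bar mh + p*bar q*mh) * pi (S k) 0%nat + bar p*bar q*mh * pi (S (S k)) 0%nat.
Proof.
  etransitivity; [apply H|].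
  replace (S k + 1)%nat with (k+2)%nat by lia.
  rewrite sum3.
  2:{ intros i Hi. apply sum_eq_R0. intros j _. tsimp; ring. }
  rewrite !sum1.
  tsimp; ring.
Qed.

Lemma is_series_R a l : is_series a l <-> is_lim_seq (fun n => sum_f_R0 a n) l.
Proof.
  rewrite is_series_Reals, is_lim_seq_Reals. unfold infinite_sum, Un_cv. tauto.
Qed.

Lemma is_series_lin (al be : R) a b la lb : is_series a la -> is_series b lb ->
  is_series (fun n => al * a n + be * b n) (al * la + be * lb).
Proof.
  intros Ha Hb.
  apply (is_series_plus (fun n => al * a n) (fun n => be * b n)).
  - apply (is_series_scal_l al a la Ha).
  - apply (is_series_scal_l be b lb Hb).
Qed.

Lemma nonneg_ex_series a M : (forall n, 0 <= a n) -> (forall n, sum_f_R0 a n <= M) ->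
  ex_series a /\ Series a <= M /\ (forall n, sum_f_R0 a n <= Series a).
Proof.
  intros H0 HM.
  assert (Hg : Un_growing (fun n => sum_f_R0 a n)).
  { intro n. rewrite tech5. specialize (H0 (S n)). lra. }
  destruct (growing_cv _ Hg) as [l Hl].
  { exists M. intros y [i ->]. apply HM. }
  assert (Hs : is_series a l). { apply is_series_R. apply is_lim_seq_Reals. exact Hl. }
  assert (HS : Series a = l) by (apply is_series_unique; exact Hs).
  split; [exists l; exact Hs|]. rewrite HS. split.
  - apply is_series_R in Hs.
    assert (Hle := is_lim_seq_le _ _ _ _ HM Hs (is_lim_seq_const M)). simpl in Hle. exact Hle.
  - apply is_series_R in Hs. apply (is_lim_seq_incr_compare _ _ Hs). exact Hg.
Qed.

Definition cS (a : nat -> C) (L : C) :=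
  is_series (fun n => Re (a n)) (Re L) /\ is_series (fun n => Im (a n)) (Im L).
Definition ZS (c : nat -> R) (x L : C) := cS (fun k => (RtoC (c k) * Cpow x k)%C) L.

Lemma ZS_ext c d x L : (forall k, c k = d k) -> ZS c x L -> ZS d x L.
Proof.
  intros H [H1 H2]. split.
  - eapply is_series_ext; [|exact H1]. intro n; simpl; rewrite H; reflexivity.
  - eapply is_series_ext; [|exact H2]. intro n; simpl; rewrite H; reflexivity.
Qed.

Lemma iser (a b : nat -> R) (la lb : R) : (forall n, a n = b n) -> la = lb -> is_series a la -> is_series b lb.
Proof. intros H <- Ha. eapply is_series_ext; [exact H|exact Ha]. Qed.

Lemma ZS_lin (al be : R) c d x L1 L2 : ZS c x L1 -> ZS d x L2 ->
  ZS (fun k => al * c k + be * d k) x (RtoC al * L1 + RtoC be * L2)%C.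
Proof.
  intros [H1 H2] [H3 H4]. split.
  - eapply iser; [| |apply (is_series_lin al be _ _ _ _ H1 H3)].
    + intro n; simpl. destruct (Cpow x n); simpl. ring.
    + destruct L1, L2; simpl. ring.
  - eapply iser; [| |apply (is_series_lin al be _ _ _ _ H2 H4)].
    + intro n; simpl. destruct (Cpow x n); simpl. ring.
    + destruct L1, L2; simpl. ring.
Qed.

Definition sh (c : nat -> R) (k : nat) : R := match k with O => 0 | S k' => c k' end.

Lemma ZS_sh c x L : ZS c x L -> ZS (sh c) x (x * L)%C.
Proof.
  intros [H1 H2]. split.
  - apply is_series_decr_1.
    eapply iser; [| |apply (is_series_lin (Re x) (- Im x) _ _ _ _ H1 H2)].
    + intro n; simpl. destruct x as [a b]; destruct (Cpow (a,b) n); simpl. ring.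
    + destruct x, L; simpl. unfold plus, opp; simpl. ring.
  - apply is_series_decr_1.
    eapply iser; [| |apply (is_series_lin (Im x) (Re x) _ _ _ _ H1 H2)].
    + intro n; simpl. destruct x as [a b]; destruct (Cpow (a,b) n); simpl. ring.
    + destruct x, L; simpl. unfold plus, opp; simpl. ring.
Qed.

Lemma is_series_fin (a : nat -> R) : (forall k, (2 <= k)%nat -> a k = 0) ->
  is_series a (a 0%nat + a 1%nat).
Proof.
  intros H. apply is_series_R.
  apply is_lim_seq_ext_loc with (fun _ => a 0%nat + a 1%nat); [|apply is_lim_seq_const].
  exists 1%nat. intros n Hn. symmetry. induction n as [|n IH]; [lia|].
  destruct n as [|n]; [reflexivity|].
  rewrite tech5, H by lia. rewrite IH by lia. ring.
Qed.

Lemma ZS_fin c x : (forall k, (2 <= k)%nat -> c k = 0) ->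
  ZS c x (RtoC (c 0%nat) + RtoC (c 1%nat) * x)%C.
Proof.
  intros H. split.
  - eapply iser; [intro; reflexivity| |apply is_series_fin].
    + destruct x; simpl. ring.
    + intros k Hk. rewrite H by lia. simpl. ring.
  - eapply iser; [intro; reflexivity| |apply is_series_fin].
    + destruct x; simpl. ring.
    + intros k Hk. rewrite H by lia. simpl. ring.
Qed.

Lemma ZS_unique c x L1 L2 : ZS c x L1 -> ZS c x L2 -> L1 = L2.
Proof.
  intros [H1 H2] [H3 H4].
  apply is_series_unique in H1, H2, H3, H4.
  destruct L1, L2; simpl in *. f_equal; congruence.
Qed.

Lemma pow_le1 a n : 0 <= a <= 1 -> a ^ n <= 1.
Proof.
  intros H. induction n as [|n IH]; simpl; [lra|].
  assert (0 <= a ^ n) by (apply pow_le; lra). nra.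
Qed.

Lemma im_le_Cmod c : Rabs (Im c) <= Cmod c.
Proof.
  pose proof (Cmod2_alt c). pose proof (Cmod_ge_0 c).
  unfold Rabs; destruct Rcase_abs; nra.
Qed.

Lemma phi_ZS pi j x : (forall i, 0 <= pi i j) -> ex_series (fun i => pi i j) -> Cmod x <= 1 ->
  ZS (fun i => pi i j) x (phi pi j x).
Proof.
  intros H0 He Hx.
  assert (Hb : forall n, Cmod (Cpow x n) <= 1).
  { intro n. rewrite Cmod_pow. apply pow_le1. split; [apply Cmod_ge_0|exact Hx]. }
  assert (E1 : ex_series (fun i => pi i j * Re (Cpow x i))).
  { apply (@ex_series_le R_AbsRing R_CompleteNormedModule) with (fun i => pi i j); [|exact He].
    intro n. change norm with Rabs; simpl. rewrite Rabs_mult, (Rabs_pos_eq (pi n j)) by auto.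
    pose proof (re_le_Cmod (Cpow x n)). pose proof (Hb n). pose proof (H0 n).
    pose proof (Rabs_pos (Re (Cpow x n))). nra. }
  assert (E2 : ex_series (fun i => pi i j * Im (Cpow x i))).
  { apply (@ex_series_le R_AbsRing R_CompleteNormedModule) with (fun i => pi i j); [|exact He].
    intro n. change norm with Rabs; simpl. rewrite Rabs_mult, (Rabs_pos_eq (pi n j)) by auto.
    pose proof (im_le_Cmod (Cpow x n)). pose proof (Hb n). pose proof (H0 n).
    pose proof (Rabs_pos (Im (Cpow x n))). nra. }
  split.
  - eapply iser; [| |apply (Series_correct _ E1)].
    + intro n. rewrite re_scal_l. reflexivity.
    + reflexivity.
  - eapply iser; [| |apply (Series_correct _ E2)].
    + intro n. rewrite im_scal_l. reflexivity.
    + reflexivity.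
Qed.

Definition rect (f : nat -> nat -> R) n m := sum_f_R0 (fun i => sum_f_R0 (fun j => f i j) m) n.

Lemma sum_exch (f : nat -> nat -> R) n m :
  sum_f_R0 (fun i => sum_f_R0 (fun j => f i j) m) n =
  sum_f_R0 (fun j => sum_f_R0 (fun i => f i j) n) m.
Proof.
  induction n as [|n IH]; simpl.
  - reflexivity.
  - rewrite IH. rewrite <- sum_plus. reflexivity.
Qed.

Lemma sum_nonneg (a : nat -> R) n : (forall i, 0 <= a i) -> 0 <= sum_f_R0 a n.
Proof. intros H. induction n; simpl; [apply H|]. pose proof (H (S n)); lra. Qed.

Lemma rect_mono f n m n' m' : (forall i j, 0 <= f i j) -> (n <= n')%nat -> (m <= m')%nat ->
  rect f n m <= rect f n' m'.
Proof.
  intros H0 Hn Hm. unfold rect.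
  apply Rle_trans with (sum_f_R0 (fun i => sum_f_R0 (fun j => f i j) m') n).
  - apply sum_Rle. intros i _. induction Hm; [lra|]. rewrite tech5.
    pose proof (H0 i (S m0)); lra.
  - induction Hn; [lra|]. rewrite tech5.
    pose proof (sum_nonneg (fun j => f (S m0) j) m' (fun j => H0 _ _)). lra.
Qed.

Lemma Series_sum (g : nat -> nat -> R) n : (forall k, ex_series (g k)) ->
  ex_series (fun i => sum_f_R0 (fun k => g k i) n) /\
  sum_f_R0 (fun k => Series (g k)) n = Series (fun i => sum_f_R0 (fun k => g k i) n).
Proof.
  intros H. induction n as [|n [IHe IH]]; simpl.
  - split; [exact (H 0%nat)|reflexivity].
  - split.
    + apply (ex_series_plus _ _ IHe (H (S n))).
    + rewrite IH. rewrite Series_plus; auto.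
Qed.

Lemma Fub (f : nat -> nat -> R) : (forall i j, 0 <= f i j) -> (forall n m, rect f n m <= 1) ->
  is_lim_seq (fun N => rect f N N) 1 ->
  (forall j, ex_series (fun i => f i j) /\ Series (fun i => f i j) <= 1) /\
  is_series (fun j => Series (fun i => f i j)) 1.
Proof.
  intros H0 Hr Hl.
  assert (Hrow : forall j, ex_series (fun i => f i j) /\ Series (fun i => f i j) <= 1).
  { intro j. destruct (nonneg_ex_series (fun i => f i j) 1) as [A [B _]]; auto.
    intro n. eapply Rle_trans; [|apply (Hr n j)]. unfold rect. apply sum_Rle.
    intros i _. clear -H0. destruct j; simpl; [lra|].
    pose proof (sum_nonneg (fun k => f i k) j (fun k => H0 i k)). lra. }
  split; [exact Hrow|].
  apply is_series_R.
  apply is_lim_seq_le_le with (fun N => rect f N N) (fun _ => 1); [|exact Hl|apply is_lim_seq_const].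
  intro n.
  destruct (Series_sum (fun j i => f i j) n) as [He Heq]; [intro k; apply Hrow|].
  simpl in Heq. rewrite Heq.
  destruct (nonneg_ex_series (fun i => sum_f_R0 (fun k => f i k) n) 1) as [_ [B C]].
  - intro i. apply sum_nonneg. intro; auto.
  - intro m. apply (Hr m n).
  - split; [|exact B]. apply (C n).
Qed.

Lemma stat_facts p q mh ml pi : stationary p q mh ml pi ->
  (forall i j, 0 <= pi i j) /\ (forall n m, rect pi n m <= 1) /\ is_lim_seq (fun N => rect pi N N) 1.
Proof.
  intros [H0 [Hl _]].
  assert (Hsq : forall N, rect pi N N <= 1).
  { apply (is_lim_seq_incr_compare _ _ Hl). intro n. apply (rect_mono pi n n (S n) (S n)); auto. }
  split; [exact H0|]. split; [|exact Hl].
  intros n m. eapply Rle_trans; [|apply (Hsq (Nat.max n m))]. apply rect_mono; auto; lia.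
Qed.

Lemma rect_T f n m : rect (fun i j => f j i) n m = rect f m n.
Proof. unfold rect. symmetry. apply sum_exch. Qed.

Lemma quad p q mh : 0 < p < 1 -> 0 < q < 1 -> 0 < mh < 1 ->
  let A := p*bar q*bar mh in let B := bar p*bar q*mh in
  let b := 1 - (p*mh + bar p*bar mh)*bar q in
  let x0 := x0f p q mh 0 in let x1 := x1f p q mh 0 in
  0 < x0 < 1 /\ 1 < x1 /\ b = A * (x0 + x1) /\ B = A * (x0 * x1).
Proof.
  intros Hp Hq Hm A B b x0 x1.
  assert (HA : 0 < A) by (unfold A, bar; apply Rmult_lt_0_compat; [apply Rmult_lt_0_compat|]; lra).
  assert (HB : 0 < B) by (unfold B, bar; apply Rmult_lt_0_compat; [apply Rmult_lt_0_compat|]; lra).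
  assert (Hb : b - A - B = q) by (unfold b, A, B, bar; ring).
  assert (HD : Defs.Delta p q mh 0 = b^2 - 4*A*B) by (unfold Defs.Delta, b, A, B, bar; ring).
  assert (HDp : 0 < b^2 - 4*A*B).
  { replace (b^2 - 4*A*B) with ((b-A-B)*(b+A+B) + (A-B)^2) by ring. rewrite Hb.
    pose proof (pow2_ge_0 (A-B)). assert (0 < q*(b+A+B)) by (apply Rmult_lt_0_compat; lra). lra. }
  set (s := sqrt (Defs.Delta p q mh 0)).
  assert (Hs2 : s * s = b^2 - 4*A*B) by (unfold s; rewrite sqrt_sqrt; lra).
  assert (Hs0 : 0 < s) by (unfold s; apply sqrt_lt_R0; lra).
  assert (E0 : x0 = (b - s) / (2*A)).
  { unfold x0, x0f. fold s. unfold b, A. replace (q*0 + bar q) with (bar q) by ring.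
    f_equal; ring. }
  assert (E1 : x1 = (b + s) / (2*A)).
  { unfold x1, x1f. fold s. unfold b, A. replace (q*0 + bar q) with (bar q) by ring.
    f_equal; ring. }
  assert (Hb0 : 0 < b) by lra.
  repeat split.
  - rewrite E0. apply Rdiv_lt_0_compat; [|lra]. nra.
  - rewrite E0. apply Rmult_lt_reg_r with (2*A); [lra|].
    unfold Rdiv. rewrite Rmult_assoc, Rinv_l by lra. nra.
  - rewrite E1. apply Rmult_lt_reg_r with (2*A); [lra|].
    unfold Rdiv. rewrite Rmult_assoc, Rinv_l by lra. nra.
  - rewrite E0, E1. field. lra.
  - rewrite E0, E1. replace ((b - s) / (2 * A) * ((b + s) / (2 * A))) with ((b*b - s*s)/(4*A*A)) by (field; lra).
    rewrite Hs2. field. lra.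
Qed.

Lemma pi_le1 pi i j : (forall i j, 0 <= pi i j) -> (forall n m, rect pi n m <= 1) -> pi i j <= 1.
Proof.
  intros H0 Hr. eapply Rle_trans; [|apply (Hr i j)]. unfold rect.
  assert (L : forall (a : nat -> R) n, (forall k, 0 <= a k) -> a n <= sum_f_R0 a n).
  { intros a n Ha. destruct n; simpl; [lra|]. pose proof (sum_nonneg a n Ha). lra. }
  eapply Rle_trans; [|apply (L (fun i => sum_f_R0 (fun j => pi i j) j))].
  - apply (L (fun j => pi i j)). auto.
  - intro; apply sum_nonneg; auto.
Qed.

Lemma level0 p q mh ml pi : 0 < p < 1 -> 0 < q < 1 -> 0 < mh < 1 ->
  stationary p q mh ml pi ->
  forall k, pi (S k) 0%nat = / x1f p q mh 0 * pi k 0%nat.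
Proof.
  intros Hp Hq Hm Hst.
  destruct (stat_facts _ _ _ _ _ Hst) as [H0 [Hr _]].
  destruct Hst as [_ [_ Hbal]].
  destruct (quad p q mh Hp Hq Hm) as [Hx0 [Hx1 [Hs Hprod]]].
  set (x0 := x0f p q mh 0) in *. set (x1 := x1f p q mh 0) in *.
  set (A := p*bar q*bar mh) in *. set (B := bar p*bar q*mh) in *.
  assert (HA : 0 < A) by (unfold A, bar; apply Rmult_lt_0_compat; [apply Rmult_lt_0_compat|]; lra).
  set (e := fun k => pi (S k) 0%nat - / x1 * pi k 0%nat).
  assert (Hrec : forall k, e (S k) = / x0 * e k).
  { intro k. unfold e.
    pose proof (bal_F1 _ _ _ _ _ Hbal k) as F.
    assert (HBn : B <> 0) by (rewrite Hprod; apply Rmult_integral_contrapositive; split; nra).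
    assert (pi (S (S k)) 0%nat = ((1 - (p*mh + bar p*bar mh)*bar q) * pi (S k) 0%nat - A * pi k 0%nat) / B).
    { assert (F' : B * pi (S (S k)) 0%nat = pi (S k) 0%nat - A * pi k 0%nat - (bar p*bar q*bar mh + p*bar q*mh) * pi (S k) 0%nat)
        by (unfold A, B; rewrite F at 1; ring).
      assert (B * pi (S (S k)) 0%nat = (1 - (p*mh + bar p*bar mh)*bar q) * pi (S k) 0%nat - A * pi k 0%nat)
        by (rewrite F'; unfold bar; ring).
      rewrite <- H. field. auto. }
    rewrite H. rewrite Hs, Hprod. field. split; lra. }
  assert (Hgeo : forall k, e k = (/ x0) ^ k * e 0%nat).
  { induction k; simpl; [ring|]. rewrite Hrec, IHk. ring. }
  assert (Hbd : forall k, Rabs (e k) <= 2).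
  { intro k. unfold e. pose proof (pi_le1 pi (S k) 0 H0 Hr). pose proof (pi_le1 pi k 0 H0 Hr).
    pose proof (H0 (S k) 0%nat). pose proof (H0 k 0%nat).
    assert (0 < / x1 < 1). { split. apply Rinv_0_lt_compat; lra. rewrite <- Rinv_1. apply Rinv_lt_contravar; lra. }
    unfold Rabs; destruct Rcase_abs; nra. }
  assert (He0 : e 0%nat = 0).
  { destruct (Req_dec (e 0%nat) 0) as [|Hne]; auto. exfalso.
    assert (Hr1 : Rabs (/ x0) > 1).
    { rewrite Rabs_pos_eq by (left; apply Rinv_0_lt_compat; lra).
      rewrite <- Rinv_1. apply Rinv_lt_contravar; lra. }
    destruct (Pow_x_infinity _ Hr1 (3 / Rabs (e 0%nat))) as [N HN].
    specialize (HN N (le_n N)). specialize (Hbd N). rewrite Hgeo, Rabs_mult in Hbd.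
    assert (0 < Rabs (e 0%nat)) by (apply Rabs_pos_lt; auto).
    assert (Rabs ((/x0)^N) * Rabs (e 0%nat) >= 3).
    { apply Rle_ge. apply Rge_le in HN. apply Rmult_le_reg_r with (/ Rabs (e 0%nat)).
      apply Rinv_0_lt_compat; auto. rewrite Rmult_assoc, Rinv_r by lra. unfold Rdiv in HN. lra. }
    lra. }
  intro k. assert (e k = 0) by (rewrite Hgeo, He0; ring). unfold e in H. lra.
Qed.

Lemma rows_ex p q mh ml pi : stationary p q mh ml pi ->
  forall j, ex_series (fun i => pi i j) /\ Series (fun i => pi i j) <= 1.
Proof.
  intros Hst. destruct (stat_facts _ _ _ _ _ Hst) as [H0 [Hr Hl]].
  apply (Fub pi H0 Hr Hl).
Qed.

Lemma FE p q mh ml pi : stationary p q mh ml pi -> forall j x, Cmod x <= 1 ->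
  let A := p*bar q*bar mh in let B := bar p*bar q*mh in
  let b := 1 - (bar p*bar q*bar mh + p*bar q*mh) in
  let A' := p*q*bar mh in let Cc := p*q*mh + bar p*q*bar mh in let B' := bar p*q*mh in
  ((RtoC A * x * x - RtoC b * x + RtoC B) * phi pi (S j) x
  + (RtoC A' * x * x + RtoC Cc * x + RtoC B') * phi pi j x
  = RtoC (B * pi 0%nat (S j) + B' * pi 0%nat j)
    + RtoC (- b * pi 0%nat (S j) + B * pi 1%nat (S j) + Cc * pi 0%nat j + B' * pi 1%nat j) * x)%C.
Proof.
  intros Hst j x Hx A B b A' Cc B'.
  destruct (stat_facts _ _ _ _ _ Hst) as [H0 [Hr Hl]].
  pose proof (rows_ex _ _ _ _ _ Hst) as Hrow.
  destruct Hst as [_ [_ Hbal]].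
  assert (Hu := phi_ZS pi (S j) x (fun i => H0 i _) (proj1 (Hrow _)) Hx).
  assert (Hv := phi_ZS pi j x (fun i => H0 i _) (proj1 (Hrow _)) Hx).
  assert (Hu1 := ZS_sh _ _ _ Hu). assert (Hu2 := ZS_sh _ _ _ Hu1).
  assert (Hv1 := ZS_sh _ _ _ Hv). assert (Hv2 := ZS_sh _ _ _ Hv1).
  assert (Z1 := ZS_lin A (-b) _ _ x _ _ Hu2 Hu1).
  assert (Z2 := ZS_lin 1 B _ _ x _ _ Z1 Hu).
  assert (Z3 := ZS_lin A' Cc _ _ x _ _ Hv2 Hv1).
  assert (Z4 := ZS_lin 1 B' _ _ x _ _ Z3 Hv).
  assert (Z5 := ZS_lin 1 1 _ _ x _ _ Z2 Z4).
  eapply ZS_unique in Z5; [|apply ZS_fin].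
  - rename Z5 into Heq. rewrite RtoC_opp in Heq. cbv beta in Heq. simpl sh in Heq.
    etransitivity; [|etransitivity; [symmetry; exact Heq|]].
    + ring.
    + f_equal; [f_equal; ring|f_equal; f_equal; ring].
  - intros k Hk. destruct k as [|[|k]]; [lia|lia|]. simpl sh.
    pose proof (bal_E1 _ _ _ _ _ Hbal k j) as E.
    unfold A, B, b, A', Cc, B'. lra.
Qed.

Open Scope C_scope.
Lemma alg (P Q M X0 X1 x U U0 V V0 w0 w1 : C) :
  P <> 0 -> 1 - Q <> 0 -> 1 - M <> 0 -> x - X1 <> 0 -> x - X0 <> 0 ->
  (P*(1-Q)*(1-M)*x*x - P*(1-Q)*(1-M)*(X0+X1)*x + P*(1-Q)*(1-M)*(X0*X1)) * U
    + (P*Q*(1-M)*x*x + (P*Q*M + (1-P)*Q*(1-M))*x + (1-P)*Q*M) * V = w0 + w1*x ->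
  (P*(1-Q)*(1-M)*X0*X0 - P*(1-Q)*(1-M)*(X0+X1)*X0 + P*(1-Q)*(1-M)*(X0*X1)) * U0
    + (P*Q*(1-M)*X0*X0 + (P*Q*M + (1-P)*Q*(1-M))*X0 + (1-P)*Q*M) * V0 = w0 + w1*X0 ->
  U = (w1 - Q*((1-P)*(1-M) + P*M)*V0)/(P*(1-Q)*(1-M)) / (x - X1)
      - Q * V0 * (x + X0) / ((1-Q)*(x-X1))
      - Q*(P*x + (1-P))*((1-M)*x + M)/((P*(1-Q)*(1-M))*(x-X1)) * ((V - V0)/(x - X0)).
Proof.
  intros HP HQ HM H1 H0 Hx Hx0.
  assert (Hw0 : w0 = (P*Q*(1-M)*X0*X0 + (P*Q*M + (1-P)*Q*(1-M))*X0 + (1-P)*Q*M) * V0 - w1*X0).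
  { transitivity (w0 + w1*X0 - w1*X0); [ring|]. rewrite <- Hx0. ring. }
  assert (HK : (P*(1-Q)*(1-M)*x*x - P*(1-Q)*(1-M)*(X0+X1)*x + P*(1-Q)*(1-M)*(X0*X1))
               = P*(1-Q)*(1-M)*(x-X0)*(x-X1)) by ring.
  rewrite HK in Hx.
  assert (HU : U = (w0 + w1*x - (P*Q*(1-M)*x*x + (P*Q*M + (1-P)*Q*(1-M))*x + (1-P)*Q*M) * V)
                   / (P*(1-Q)*(1-M)*(x-X0)*(x-X1))).
  { rewrite <- Hx. field. repeat split; auto. }
  rewrite HU, Hw0. field. repeat split; auto.
Qed.
Close Scope C_scope.

Lemma part2 p q mh ml pi : 0 < p < 1 -> 0 < q < 1 -> 0 < mh < 1 -> 0 < ml < 1 ->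
  stationary p q mh ml pi ->
  let x0 := x0f p q mh 0 in
  let x1 := x1f p q mh 0 in
  let a (j : nat) : C :=
    ((RtoC ((bar p * bar q * (ml - mh) - bar p * q * ml) * pi 0%nat j
             - bar p * bar q * ml * pi 0%nat (S j)
             + bar p * q * (ml - mh) * pi 0%nat (j - 1)%nat)
      - RtoC (q * (bar p * bar mh + p * mh)) * phi pi (j - 1)%nat x0)
     / RtoC (p * bar q * bar mh))%C in
  (forall (j : nat) (x : C), (1 <= j)%nat -> Cmod x <= 1 -> x <> x0 ->
     phi pi j x =
       a j / (x - x1)
       - (q : C) * phi pi (j - 1)%nat x0 * (x + x0) / ((bar q : C) * (x - x1))
       - (q : C) * (p * x + bar p) * (bar mh * x + mh)
           / ((p * bar q * bar mh)%R * (x - x1))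
         * ((phi pi (j - 1)%nat x - phi pi (j - 1)%nat x0) / (x - x0)))%C.
Proof.
  intros Hp Hq Hm Hl Hst x0 x1 a j x Hj Hx Hne.
  destruct j as [|j]; [lia|]. unfold a. replace (S j - 1)%nat with j by lia.
  destruct (quad p q mh Hp Hq Hm) as [Hx0 [Hx1 [Hs Hpr]]]. fold x0 x1 in Hx0, Hx1, Hs, Hpr.
  assert (Hx0c : Cmod (RtoC x0) <= 1) by (rewrite Cmod_R, Rabs_pos_eq; lra).
  pose proof (FE _ _ _ _ _ Hst j x Hx) as Fx.
  pose proof (FE _ _ _ _ _ Hst j (RtoC x0) Hx0c) as F0.
  cbv zeta in Fx, F0.
  destruct Hst as [H0 [Hlim Hbal]].
  pose proof (bal_E0 _ _ _ _ _ Hbal j) as E0.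
  set (w0 := RtoC (bar p * bar q * mh * pi 0%nat (S j) + bar p * q * mh * pi 0%nat j)) in *.
  set (w1 := RtoC (- (1 - (bar p * bar q * bar mh + p * bar q * mh)) * pi 0%nat (S j) +
             bar p * bar q * mh * pi 1%nat (S j) + (p * q * mh + bar p * q * bar mh) * pi 0%nat j +
             bar p * q * mh * pi 1%nat j)) in *.
  assert (Hnum : RtoC ((bar p * bar q * (ml - mh) - bar p * q * ml) * pi 0%nat (S j)
             - bar p * bar q * ml * pi 0%nat (S (S j)) + bar p * q * (ml - mh) * pi 0%nat j) = w1).
  { unfold w1. f_equal. unfold bar in *. lra. }
  rewrite Hnum.
  assert (Hb : 1 - (bar p * bar q * bar mh + p * bar q * mh) = p * bar q * bar mh * (x0 + x1))
    by (rewrite <- Hs; unfold bar; ring).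
  assert (HB : bar p * bar q * mh = p * bar q * bar mh * (x0 * x1)) by (rewrite <- Hpr; reflexivity).
  rewrite Hb in Fx, F0. rewrite HB in Fx, F0.
  assert (Halg := alg (RtoC p) (RtoC q) (RtoC mh) (RtoC x0) (RtoC x1) x
     (phi pi (S j) x) (phi pi (S j) (RtoC x0)) (phi pi j x) (phi pi j (RtoC x0)) w0 w1).
  assert (nz : forall r, r <> 0 -> RtoC r <> 0).
  { intros r Hr Hc. apply Hr. apply (f_equal Re) in Hc. simpl in Hc. exact Hc. }
  rewrite Halg.
  - unfold bar. repeat (rewrite ?RtoC_plus, ?RtoC_mult, ?RtoC_minus). reflexivity.
  - apply nz; lra.
  - rewrite <- RtoC_minus. apply nz; lra.
  - rewrite <- RtoC_minus. apply nz; lra.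
  - intro Hc. assert (x = RtoC x1).
    { transitivity (x - RtoC x1 + RtoC x1)%C; [ring|]. rewrite Hc. ring. }
    subst x. rewrite Cmod_R, Rabs_pos_eq in Hx; lra.
  - apply Cminus_eq_contra. exact Hne.
  - unfold bar in Fx. repeat (rewrite ?RtoC_plus, ?RtoC_mult, ?RtoC_minus in Fx).
    rewrite <- Fx. ring.
  - unfold bar in F0. repeat (rewrite ?RtoC_plus, ?RtoC_mult, ?RtoC_minus in F0).
    rewrite <- F0. ring.
Qed.

Lemma part1 p q mh ml pi : 0 < p < 1 -> 0 < q < 1 -> 0 < mh < 1 ->
  stationary p q mh ml pi ->
  forall x : C, Cmod x <= 1 ->
     phi pi 0 x = ((pi 0%nat 0%nat : C) / (1 - RtoC (/ x1f p q mh 0) * x))%C.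
Proof.
  intros Hp Hq Hm Hst x Hx.
  pose proof (level0 _ _ _ _ _ Hp Hq Hm Hst) as Hlev.
  destruct (quad p q mh Hp Hq Hm) as [Hx0 [Hx1 _]].
  set (x1 := x1f p q mh 0) in *. set (r0 := / x1) in *.
  assert (Hr0 : 0 < r0 < 1).
  { split. apply Rinv_0_lt_compat; lra. unfold r0. rewrite <- Rinv_1. apply Rinv_lt_contravar; lra. }
  destruct (stat_facts _ _ _ _ _ Hst) as [H0 _].
  pose proof (rows_ex _ _ _ _ _ Hst) as Hrow.
  assert (Hu := phi_ZS pi 0 x (fun i => H0 i _) (proj1 (Hrow _)) Hx).
  assert (Hu1 := ZS_sh _ _ _ Hu).
  assert (Z := ZS_lin 1 (- r0) _ _ x _ _ Hu Hu1).
  eapply ZS_unique in Z; [|apply ZS_fin].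
  - cbv beta in Z. simpl sh in Z.
    assert (Hne : (1 - RtoC r0 * x)%C <> 0).
    { intro Hc. assert (Cmod (RtoC r0 * x) = 1).
      { replace (RtoC r0 * x)%C with (1 - (1 - RtoC r0 * x))%C by ring. rewrite Hc.
        replace (1 - 0)%C with (RtoC 1) by ring. rewrite Cmod_R. apply Rabs_pos_eq; lra. }
      rewrite Cmod_mult, Cmod_R, Rabs_pos_eq in H by lra.
      pose proof (Cmod_ge_0 x). nra. }
    assert (Hk : (phi pi 0 x * (1 - RtoC r0 * x) = RtoC (pi 0%nat 0%nat))%C).
    { transitivity (RtoC 1 * phi pi 0 x + RtoC (- r0) * (x * phi pi 0 x))%C.
      - rewrite RtoC_opp. ring.
      - rewrite <- Z. replace (1 * pi 0%nat 0%nat + - r0 * 0)%R with (pi 0%nat 0%nat) by ring.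
        replace (1 * pi 1%nat 0%nat + - r0 * pi 0%nat 0%nat)%R with 0%R.
        + ring.
        + rewrite Hlev. fold x1 r0. ring. }
    rewrite <- Hk. field. exact Hne.
  - intros k Hk. destruct k as [|[|k]]; [lia|lia|]. simpl sh. rewrite Hlev. fold x1 r0. ring.
Qed.

Lemma is_series_sh (a : nat -> R) (l : R) : is_series a l -> is_series (sh a) l.
Proof.
  intros H. apply is_series_decr_1. eapply iser; [| |exact H].
  - intro; reflexivity.
  - simpl. unfold plus, opp; simpl. ring.
Qed.

Lemma lim_lin (a b : R) (u v : nat -> R) (lu lv : R) : is_lim_seq u lu -> is_lim_seq v lv ->
  is_lim_seq (fun n => a * u n + b * v n) (a * lu + b * lv).
Proof.
  intros Hu Hv. apply is_lim_seq_plus'.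
  - apply (is_lim_seq_mult' (fun _ => a) u a lu (is_lim_seq_const a) Hu).
  - apply (is_lim_seq_mult' (fun _ => b) v b lv (is_lim_seq_const b) Hv).
Qed.

Lemma const_lim (G : nat -> R) (l : R) : (forall n, G n = G 0%nat) -> is_lim_seq G l -> G 0%nat = l.
Proof.
  intros Hc Hl.
  assert (is_lim_seq (fun _ => G 0%nat) l) by (eapply is_lim_seq_ext; [|exact Hl]; auto).
  assert (H2 := is_lim_seq_const (G 0%nat)).
  apply is_lim_seq_unique in H, H2. rewrite H in H2. injection H2. auto.
Qed.

Lemma cols_ex p q mh ml pi : stationary p q mh ml pi ->
  (forall k, ex_series (fun l => pi k l)) /\ is_series (fun k => Series (fun l => pi k l)) 1.
Proof.
  intros Hst. destruct (stat_facts _ _ _ _ _ Hst) as [H0 [Hr Hl]].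
  destruct (Fub (fun i j => pi j i)) as [A B].
  - intros; auto.
  - intros n m. rewrite rect_T. auto.
  - eapply is_lim_seq_ext; [|exact Hl]. intro n. simpl. rewrite rect_T. reflexivity.
  - split; [intro k; apply A|exact B].
Qed.

Lemma P0_val p q mh ml pi : 0 < p < 1 -> 0 < q < 1 -> 0 < mh < 1 -> p < mh ->
  stationary p q mh ml pi ->
  Series (fun l => pi 0%nat l) = 1 - p * bar mh / (bar p * mh).
Proof.
  intros Hp Hq Hm Hpm Hst.
  destruct (cols_ex _ _ _ _ _ Hst) as [Hc Hsum].
  destruct Hst as [H0 [_ Hbal]].
  set (Cs := fun k => Series (fun l => pi k l)).
  set (A := p*bar q*bar mh). set (B := bar p*bar q*mh).
  set (A' := p*q*bar mh). set (Cc := p*q*mh + bar p*q*bar mh). set (B' := bar p*q*mh).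
  set (c0 := bar p*bar q*bar mh + p*bar q*mh).
  assert (Hcb : forall k, Cs (S k) = A * Cs k + A' * Cs k + Cc * Cs (S k) + B' * Cs (S (S k))
                          + B * Cs (S (S k)) + c0 * Cs (S k)).
  { intro k.
    assert (S1 := is_series_lin A A' _ _ _ _ (Series_correct _ (Hc k)) (is_series_sh _ _ (Series_correct _ (Hc k)))).
    assert (S2 := is_series_lin Cc B' _ _ _ _ (is_series_sh _ _ (Series_correct _ (Hc (S k)))) (is_series_sh _ _ (Series_correct _ (Hc (S (S k)))))).
    assert (S3 := is_series_lin B c0 _ _ _ _ (Series_correct _ (Hc (S (S k)))) (Series_correct _ (Hc (S k)))).
    assert (S4 := is_series_lin 1 1 _ _ _ _ S1 S2).
    assert (S5 := is_series_lin 1 1 _ _ _ _ S4 S3).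
    assert (S6 : is_series (fun l => pi (S k) l) (Series (fun l => pi (S k) l))) by apply Series_correct, Hc.
    assert (E : forall l, 1 * (1 * (A * pi k l + A' * sh (fun l => pi k l) l) +
                   1 * (Cc * sh (fun l => pi (S k) l) l + B' * sh (fun l => pi (S (S k)) l) l)) +
                   1 * (B * pi (S (S k)) l + c0 * pi (S k) l) = pi (S k) l).
    { intro l. destruct l as [|l]; simpl sh.
      - pose proof (bal_F1 _ _ _ _ _ Hbal k). unfold A, B, c0, A', Cc, B'. lra.
      - pose proof (bal_E1 _ _ _ _ _ Hbal k l). unfold A, B, c0, A', Cc, B'. lra. }
    apply (is_series_ext _ _ _ E) in S5.
    apply is_series_unique in S5. apply is_series_unique in S6. unfold Cs.
    assert (Series (pi (S k)) = Series (fun l => pi (S k) l)) by reflexivity. lra. }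
  set (sg := p * bar mh / (bar p * mh)).
  assert (Hpos : 0 < bar p * mh) by (unfold bar; apply Rmult_lt_0_compat; lra).
  set (G := fun k => p * bar mh * Cs k - bar p * mh * Cs (S k)).
  assert (HG : forall k, G (S k) = G k).
  { intro k. unfold G. pose proof (Hcb k). unfold A, B, c0, A', Cc, B' in H. unfold bar in *. lra. }
  assert (HGc : forall k, G k = G 0%nat) by (induction k; [reflexivity|rewrite HG; auto]).
  assert (HCl : is_lim_seq Cs 0) by (apply ex_series_lim_0; eexists; exact Hsum).
  assert (HGl : is_lim_seq G 0).
  { replace 0 with (p * bar mh * 0 + (- (bar p * mh)) * 0) by ring.
    eapply is_lim_seq_ext; [|apply lim_lin; [exact HCl|apply -> is_lim_seq_incr_1; exact HCl]].
    intro n. unfold G. ring. }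
  assert (HG0 := const_lim G 0 HGc HGl).
  assert (Hrec : forall k, Cs k = sg ^ k * Cs 0%nat).
  { induction k; simpl; [ring|].
    assert (G k = 0) by (rewrite HGc; exact HG0). unfold G in H.
    assert (Cs (S k) = sg * Cs k).
    { replace (Cs (S k)) with ((bar p*mh*Cs (S k))/(bar p*mh)) by (field; repeat split; unfold bar; lra).
      replace (bar p*mh*Cs (S k)) with (p*bar mh*Cs k) by lra. unfold sg. field. repeat split; unfold bar; lra. }
    rewrite H1, IHk. ring. }
  assert (Hsg : 0 <= sg < 1).
  { unfold sg. split. apply Rmult_le_pos; [unfold bar; apply Rmult_le_pos; lra|left; apply Rinv_0_lt_compat; lra].
    apply Rmult_lt_reg_r with (bar p * mh); auto. unfold Rdiv. rewrite Rmult_assoc, Rinv_l by lra.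
    unfold bar. nra. }
  assert (Hgeo := is_series_geom sg ltac:(rewrite Rabs_pos_eq; lra)).
  assert (Hg := is_series_lin (Cs 0%nat) 0 _ _ _ _ Hgeo Hgeo).
  assert (Hg' : is_series (fun k => Cs k) (Cs 0%nat * / (1 - sg))).
  { eapply iser; [| |exact Hg]. intro n. cbv beta. rewrite (Hrec n). ring. ring. }
  apply is_series_unique in Hg'. apply is_series_unique in Hsum.
  assert (Cs 0%nat = 1 - sg).
  { assert (Hs1 : Series (fun k => Cs k) = 1) by exact Hsum.
    assert (Cs 0%nat * / (1 - sg) = 1) by congruence.
    apply Rmult_eq_reg_r with (/ (1 - sg)). rewrite H. field. lra.
    apply Rinv_neq_0_compat. lra. }
  exact H.
Qed.

Lemma phi_one pi j : phi pi j (RtoC 1) = RtoC (Series (fun i => pi i j)).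
Proof.
  unfold phi. change (RtoC (Series (fun i => pi i j))) with (Series (fun i => pi i j), 0). f_equal.
  - apply Series_ext. intro n. rewrite Cpow_1_l. simpl. ring.
  - transitivity (Series (fun _ : nat => 0)).
    + apply Series_ext. intro n. rewrite Cpow_1_l. simpl. ring.
    + apply is_series_unique. eapply iser; [intro; reflexivity| |apply is_series_fin; auto]. cbv beta. ring.
Qed.

Lemma part3 p q mh ml pi : 0 < p < 1 -> 0 < q < 1 -> 0 < mh < 1 -> 0 < ml < 1 ->
  p / mh + q / ml < 1 -> stationary p q mh ml pi ->
  pi 0%nat 0%nat = (1 - (p / mh + q / ml)) / (bar p * bar q).
Proof.
  intros Hp Hq Hm Hl Hrho Hst.
  assert (Hpm : p < mh).
  { assert (0 < q / ml) by (apply Rdiv_lt_0_compat; lra).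
    assert (p / mh < 1) by lra. apply Rmult_lt_reg_r with (/ mh). apply Rinv_0_lt_compat; lra.
    rewrite Rinv_r by lra. exact H0. }
  pose proof (P0_val _ _ _ _ _ Hp Hq Hm Hpm Hst) as HP0.
  destruct (cols_ex _ _ _ _ _ Hst) as [Hc _].
  destruct (stat_facts _ _ _ _ _ Hst) as [H0 [Hr Hlim]].
  destruct (Fub pi H0 Hr Hlim) as [Hrow Hrs].
  set (R := fun j => Series (fun i => pi i j)).
  set (P0 := Series (fun l => pi 0%nat l)) in *.
  assert (HFE : forall j, - q * R (S j) + q * R j =
     bar p * bar q * mh * pi 0%nat (S j) + bar p * q * mh * pi 0%nat j +
     (- (1 - (bar p * bar q * bar mh + p * bar q * mh)) * pi 0%nat (S j) +
      bar p * bar q * mh * pi 1%nat (S j) + (p * q * mh + bar p * q * bar mh) * pi 0%nat j +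
      bar p * q * mh * pi 1%nat j)).
  { intro j. assert (Hx1 : Cmod (RtoC 1) <= 1) by (rewrite Cmod_R, Rabs_R1; lra).
    pose proof (FE _ _ _ _ _ Hst j (RtoC 1) Hx1) as F. cbv zeta in F.
    rewrite !phi_one in F. apply (f_equal Re) in F. simpl in F. fold (R j) (R (S j)) in F.
    unfold bar in *. lra. }
  destruct Hst as [_ [_ Hbal]].
  set (F := fun j => q * R j + (p*q + bar p*q*bar ml - q) * pi 0%nat j - bar p*bar q*ml * pi 0%nat (S j)).
  assert (HF : forall j, F (S j) = F j).
  { intro j. unfold F. pose proof (HFE j). pose proof (bal_E0 _ _ _ _ _ Hbal j). unfold bar in *. lra. }
  assert (HFc : forall j, F j = F 0%nat) by (induction j; [reflexivity|rewrite HF; auto]).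
  assert (HR0 : is_lim_seq R 0) by (apply ex_series_lim_0; eexists; exact Hrs).
  assert (Hp0 : is_lim_seq (fun j => pi 0%nat j) 0) by (apply ex_series_lim_0; apply Hc).
  assert (HFl : is_lim_seq F 0).
  { replace 0 with (1 * (q * 0 + (p*q + bar p*q*bar ml - q) * 0) + (- (bar p*bar q*ml)) * 0) by ring.
    eapply is_lim_seq_ext; [|apply lim_lin; [apply lim_lin; [exact HR0|exact Hp0]|apply -> is_lim_seq_incr_1; exact Hp0]].
    intro n. unfold F. ring. }
  assert (HF0 := const_lim F 0 HFc HFl).
  assert (HS1 := is_series_lin q (p*q + bar p*q*bar ml - q) _ _ _ _ Hrs (Series_correct _ (Hc 0%nat))).
  assert (Hsh : is_series (fun j => pi 0%nat (S j)) (P0 - pi 0%nat 0%nat)).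
  { apply is_series_incr_1. eapply iser; [intro; reflexivity| |apply Series_correct, Hc].
    unfold plus; simpl. unfold P0. replace (Series (fun l => pi 0%nat l)) with (Series (pi 0%nat)) by reflexivity. ring. }
  assert (HS2 := is_series_lin 1 (- (bar p*bar q*ml)) _ _ _ _ HS1 Hsh).
  assert (HS3 : is_series (fun j => F j) (1 * (q * 1 + (p*q + bar p*q*bar ml - q) * P0) + - (bar p*bar q*ml) * (P0 - pi 0%nat 0%nat))).
  { eapply iser; [| |exact HS2].
    - intro n. unfold F, R. cbv beta. ring.
    - reflexivity. }
  assert (HS4 : is_series (fun j => F j) 0).
  { eapply iser; [| |apply (is_series_fin (fun _ => 0)); auto]. intro n; rewrite HFc, HF0; reflexivity. cbv beta. ring. }
  apply is_series_unique in HS3. apply is_series_unique in HS4. rewrite HS3 in HS4.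
  rewrite HP0 in HS4. clear - HS4 Hp Hq Hm Hl.
  set (P := 1 - p * bar mh / (bar p * mh)) in *.
  assert (HD : bar p * bar q * ml <> 0) by (unfold bar; apply Rgt_not_eq; apply Rmult_lt_0_compat; [apply Rmult_lt_0_compat|]; lra).
  replace (pi 0%nat 0%nat) with ((bar p * bar q * ml * pi 0%nat 0%nat) / (bar p * bar q * ml)) by (field; unfold bar; repeat split; lra).
  replace (bar p * bar q * ml * pi 0%nat 0%nat) with (bar p*bar q*ml*P - q - (p*q + bar p*q*bar ml - q)*P) by lra.
  unfold P, bar. field. repeat split; lra.
Qed.

Theorem lemma3p2 (p q mh ml : R) (pi : nat -> nat -> R) :
  0 < p < 1 -> 0 < q < 1 -> 0 < mh < 1 -> 0 < ml < 1 ->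
  p + q + mh + ml = 1 ->
  p / mh + q / ml < 1 ->
  stationary p q mh ml pi ->
  let x0 := x0f p q mh 0 in
  let x1 := x1f p q mh 0 in
  let r0 := / x1 in
  let rho := p / mh + q / ml in
  let a (j : nat) : C :=
    ((RtoC ((bar p * bar q * (ml - mh) - bar p * q * ml) * pi 0%nat j
             - bar p * bar q * ml * pi 0%nat (S j)
             + bar p * q * (ml - mh) * pi 0%nat (j - 1)%nat)
      - RtoC (q * (bar p * bar mh + p * mh)) * phi pi (j - 1)%nat x0)
     / RtoC (p * bar q * bar mh))%C in
  (forall x : C, Cmod x <= 1 ->
     phi pi 0 x = (pi 0%nat 0%nat : C) / (1 - r0 * x))%C /\
  (forall (j : nat) (x : C), (1 <= j)%nat -> Cmod x <= 1 -> x <> x0 ->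
     phi pi j x =
       a j / (x - x1)
       - (q : C) * phi pi (j - 1)%nat x0 * (x + x0) / ((bar q : C) * (x - x1))
       - (q : C) * (p * x + bar p) * (bar mh * x + mh)
           / ((p * bar q * bar mh)%R * (x - x1))
         * ((phi pi (j - 1)%nat x - phi pi (j - 1)%nat x0) / (x - x0)))%C /\
  pi 0%nat 0%nat = (1 - rho) / (bar p * bar q).
Proof.
  intros Hp Hq Hm Hl Hsum Hrho Hst x0 x1 r0 rho a.
  split; [|split].
  - intros x Hx. exact (part1 p q mh ml pi Hp Hq Hm Hst x Hx).
  - exact (part2 p q mh ml pi Hp Hq Hm Hl Hst).
  - exact (part3 p q mh ml pi Hp Hq Hm Hl Hrho Hst).
Qed.
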